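(* (1) If $\Gamma,\Delta\subseteq\mathcal{L}$ (the $\Box\!\!\rightarrow$-free fragment) satisfy $\Gamma\models_{\mathsf{N4}}\Delta$, and $\Gamma',\Delta'\subseteq\mathcal{L}_{\Box\!\!\rightarrow}$ are obtained from $\Gamma,\Delta$ by a simultaneous substitution of $\mathcal{L}_{\Box\!\!\rightarrow}$-formulas for variables, then $\Gamma'\vdash\Delta'$. Moreover, the Deduction Theorem holds for $\mathbb{N}4\mathbb{CK}$: for all $\Gamma\cup\{\phi,\psi\}\subseteq\mathcal{L}_{\Box\!\!\rightarrow}$, $\Gamma\vdash\phi\to\psi$ iff $\Gamma\cup\{\phi\}\vdash\psi$. (2) For $\phi\in\mathcal{L}$, $\vdash\phi$ iff $\phi\in\mathsf{N4}$.
   Context: $\mathcal{L}_{\Box\!\!\rightarrow}$ is built from propositional variables with $\wedge,\vee,\to$, strong negation $\sim$, and a binary would-conditional $\Box\!\!\rightarrow$; $\phi\Diamond\!\!\rightarrow\psi$ abbreviates $\sim(\phi\Box\!\!\rightarrow\sim\psi)$; $\mathcal{L}$ is the $\Box\!\!\rightarrow$-free fragment. $\mathsf{N4}$ is Nelson's paraconsistent logic: models $(W,\leq,V^+,V^-)$ with $\leq$ a preorder and $V^\pm$ assigning upward-closed sets; $w\models^\pm p$ iff $w\in V^\pm(p)$; $\wedge$ verified iff both verified, falsified iff one falsified; $\vee$ dually; $\sim$ swaps verification and falsification; $w\models^+\psi\to\chi$ iff for all $v\geq w$, $v\models^+\psi$ implies $v\models^+\chi$; $w\models^-\psi\to\chi$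 iff $w\models^+\psi$ and $w\models^-\chi$; $\Gamma\models_{\mathsf{N4}}\Delta$ iff no point verifies all of $\Gamma$ and no member of $\Delta$. Abbreviations: $\phi\leftrightarrow\psi:=(\phi\to\psi)\wedge(\psi\to\phi)$, $\phi\Rightarrow\psi:=(\phi\to\psi)\wedge(\sim\psi\to\sim\phi)$, $\phi\Leftrightarrow\psi:=(\phi\Rightarrow\psi)\wedge(\psi\Rightarrow\phi)$. $\mathbb{N}4\mathbb{CK}$ is the Hilbert system with modus ponens and axioms: the schemes of positive intuitionistic propositional logic; $\sim\sim\phi\leftrightarrow\phi$, $\sim(\phi\wedge\psi)\leftrightarrow(\sim\phi\vee\sim\psi)$, $\sim(\phi\vee\psi)\leftrightarrow(\sim\phi\wedge\sim\psi)$, $\sim(\phi\to\psi)\leftrightarrow(\phi\wedge\sim\psi)$; (A1) $((\phi\Box\!\!\rightarrow\psi)\wedge(\phi\Box\!\!\rightarrow\chi))\Leftrightarrow(\phi\Box\!\!\rightarrow(\psi\wedge\chi))$; (A2) $(\sim(\phi\Box\!\!\rightarrow\psi)\wedge(\phi\Box\!\!\rightarrow\chi))\to\sim(\phi\Box\!\!\rightarrow(\psi\vee\sim\chi))$; (A3) $((\phi\Diamond\!\!\rightarrow\psi)\to(\phi\Box\!\!\rightarrow\chi))\to(\phi\Box\!\!\rightarrow(\psi\to\chi))$; (A4) $\phi\Box\!\!\rightarrow(\psi\to\psi)$; and rules: from $\phi\Leftrightarrow\psi$ infer $(\phi\Box\!\!\rightarrow\chi)\Leftrightarrow(\psi\Box\!\!\rightarrow\chi)$;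 from $\phi\leftrightarrow\psi$ infer $(\chi\Box\!\!\rightarrow\phi)\leftrightarrow(\chi\Box\!\!\rightarrow\psi)$; from $\sim\phi\leftrightarrow\sim\psi$ infer $\sim(\chi\Box\!\!\rightarrow\phi)\leftrightarrow\sim(\chi\Box\!\!\rightarrow\psi)$. $\vdash\phi$ means $\phi$ is provable; $\Gamma\vdash\Delta$ means that for some $\theta_1,\ldots,\theta_s\in\Delta$ ($s\geq 1$), $\theta_1\vee\dots\vee\theta_s$ is derivable from members of $\Gamma$ and provable formulas by modus ponens only. *)

(* Defs.v *)
From Stdlib Require Import List.
Import ListNotations.

Inductive form : Type :=
| Var : nat -> form
| And : form -> form -> form
| Or  : form -> form -> form
| Imp : form -> form -> form
| Neg : form -> form            (* strong negation ~ *)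
| Box : form -> form -> form.   (* would-conditional  phi []-> psi *)

Fixpoint box_free (f : form) : Prop :=
  match f with
  | Var _ => True
  | And a b | Or a b | Imp a b => box_free a /\ box_free b
  | Neg a => box_free a
  | Box _ _ => False
  end.

Definition Dia (a b : form) : form := Neg (Box a (Neg b)).
Definition Iff (a b : form) : form := And (Imp a b) (Imp b a).
Definition SImp (a b : form) : form := And (Imp a b) (Imp (Neg b) (Neg a)).
Definition SIff (a b : form) : form := And (SImp a b) (SImp b a).

Fixpoint subst (s : nat -> form) (f : form) : form :=
  match f with
  | Var p => s p
  | And a b => And (subst s a) (subst s b)
  | Or a b => Or (subst s a) (subst s b)
  | Imp a b => Imp (subst s a) (subst s b)
  | Neg a => Neg (subst s a)
  | Box a b => Box (subst s a) (subst s b)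
  end.

Record N4model : Type := {
  W : Type;
  le : W -> W -> Prop;
  le_refl : forall w, le w w;
  le_trans : forall u v w, le u v -> le v w -> le u w;
  Vp : nat -> W -> Prop;
  Vn : nat -> W -> Prop;
  Vp_up : forall p w v, le w v -> Vp p w -> Vp p v;
  Vn_up : forall p w v, le w v -> Vn p w -> Vn p v
}.

(* forces M true w f : w verifies f ; forces M false w f : w falsifies f.
   The Box clause is irrelevant: semantics is only used on box-free formulas. *)
Fixpoint forces (M : N4model) (pos : bool) (w : W M) (f : form) : Prop :=
  match f with
  | Var p => if pos then Vp M p w else Vn M p w
  | And a b => if pos then forces M true w a /\ forces M true w b
               else forces M false w a \/ forces M false w b
  | Or a b => if pos then forces M true w a \/ forces M true w b
              else forces M false w a /\ forces M false w b
  | Neg a => forces M (negb pos) w a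
  | Imp a b => if pos then (forall v, le M w v -> forces M true v a -> forces M true v b)
               else forces M true w a /\ forces M false w b
  | Box _ _ => False
  end.

Definition N4_conseq (G D : form -> Prop) : Prop :=
  forall (M : N4model) (w : W M),
    (forall g, G g -> forces M true w g) -> exists d, D d /\ forces M true w d.

Definition N4_valid (f : form) : Prop :=
  forall (M : N4model) (w : W M), forces M true w f.

Inductive Prf : form -> Prop :=
| ax_K  : forall a b, Prf (Imp a (Imp b a))
| ax_S  : forall a b c, Prf (Imp (Imp a (Imp b c)) (Imp (Imp a b) (Imp a c)))
| ax_A1 : forall a b, Prf (Imp (And a b) a)
| ax_A2 : forall a b, Prf (Imp (And a b) b)
| ax_A3 : forall a b, Prf (Imp a (Imp b (And a b)))
| ax_O1 : forall a b, Prf (Imp a (Or a b))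
| ax_O2 : forall a b, Prf (Imp b (Or a b))
| ax_O3 : forall a b c, Prf (Imp (Imp a c) (Imp (Imp b c) (Imp (Or a b) c)))
| ax_NN  : forall a, Prf (Iff (Neg (Neg a)) a)
| ax_NA  : forall a b, Prf (Iff (Neg (And a b)) (Or (Neg a) (Neg b)))
| ax_NO  : forall a b, Prf (Iff (Neg (Or a b)) (And (Neg a) (Neg b)))
| ax_NI  : forall a b, Prf (Iff (Neg (Imp a b)) (And a (Neg b)))
| ax_C1 : forall a b c, Prf (SIff (And (Box a b) (Box a c)) (Box a (And b c)))
| ax_C2 : forall a b c, Prf (Imp (And (Neg (Box a b)) (Box a c)) (Neg (Box a (Or b (Neg c)))))
| ax_C3 : forall a b c, Prf (Imp (Imp (Dia a b) (Box a c)) (Box a (Imp b c)))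
| ax_C4 : forall a b, Prf (Box a (Imp b b))
| r_MP : forall a b, Prf (Imp a b) -> Prf a -> Prf b
| r_RA : forall a b c, Prf (SIff a b) -> Prf (SIff (Box a c) (Box b c))
| r_RC : forall a b c, Prf (Iff a b) -> Prf (Iff (Box c a) (Box c b))
| r_RCN : forall a b c, Prf (Iff (Neg a) (Neg b)) -> Prf (Iff (Neg (Box c a)) (Neg (Box c b))).

Inductive Deriv (G : form -> Prop) : form -> Prop :=
| d_hyp : forall a, G a -> Deriv G a
| d_thm : forall a, Prf a -> Deriv G a
| d_mp  : forall a b, Deriv G (Imp a b) -> Deriv G a -> Deriv G b.

Fixpoint bigOr (t : form) (ts : list form) : form :=
  match ts with
  | [] => t
  | t' :: ts' => Or t (bigOr t' ts')
  end.

Definition seq_derives (G D : form -> Prop) : Prop :=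
  exists (t : form) (ts : list form),
    D t /\ (forall x, In x ts -> D x) /\ Deriv G (bigOr t ts).

Definition img (s : nat -> form) (G : form -> Prop) : form -> Prop :=
  fun f => exists g, G g /\ f = subst s g.

Definition add (G : form -> Prop) (a : form) : form -> Prop :=
  fun f => G f \/ f = a.

Definition single (a : form) : form -> Prop := fun f => f = a.

(* Main.v *)
Require Import Defs.
From Stdlib Require Import List Classical Lia Cantor.
Import ListNotations.

Lemma Prf_I a : Prf (Imp a a).
Proof.
  exact (r_MP _ _ (r_MP _ _ (ax_S a (Imp a a) a) (ax_K a (Imp a a))) (ax_K a a)).
Qed.

Lemma Prf_trans a b c : Prf (Imp a b) -> Prf (Imp b c) -> Prf (Imp a c).
Proof.
  intros H1 H2.
  apply (r_MP _ _ (r_MP _ _ (ax_S a b c) (r_MP _ _ (ax_K _ a) H2)) H1).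
Qed.

Lemma Prf_orE a b c : Prf (Imp a c) -> Prf (Imp b c) -> Prf (Imp (Or a b) c).
Proof.
  intros H1 H2. exact (r_MP _ _ (r_MP _ _ (ax_O3 a b c) H1) H2).
Qed.

Lemma Iff_l x y : Prf (Iff x y) -> Prf (Imp x y).
Proof. intro H. exact (r_MP _ _ (ax_A1 _ _) H). Qed.
Lemma Iff_r x y : Prf (Iff x y) -> Prf (Imp y x).
Proof. intro H. exact (r_MP _ _ (ax_A2 _ _) H). Qed.

Lemma Deriv_mono G G' x : (forall y, G y -> G' y) -> Deriv G x -> Deriv G' x.
Proof.
  intros HG H; induction H.
  - apply d_hyp; auto.
  - apply d_thm; auto.
  - eapply d_mp; eauto.
Qed.

Lemma ded G a b : Deriv (add G a) b -> Deriv G (Imp a b).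
Proof.
  intro H; induction H.
  - destruct H as [H|H].
    + exact (d_mp _ _ _ (d_thm _ _ (ax_K a0 a)) (d_hyp _ _ H)).
    + subst. apply d_thm, Prf_I.
  - exact (d_mp _ _ _ (d_thm _ _ (ax_K a0 a)) (d_thm _ _ H)).
  - exact (d_mp _ _ _ (d_mp _ _ _ (d_thm _ _ (ax_S a a0 b)) IHDeriv1) IHDeriv2).
Qed.

Lemma ded_inv G a b : Deriv G (Imp a b) -> Deriv (add G a) b.
Proof.
  intro H. apply d_mp with a.
  - eapply Deriv_mono; [|exact H]. intros y Hy; left; exact Hy.
  - apply d_hyp. right; reflexivity.
Qed.

Lemma Deriv_empty x : Deriv (fun _ => False) x -> Prf x.
Proof.
  intro H; induction H; [contradiction| assumption | eapply r_MP; eauto].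
Qed.

Lemma bigOr_collapse x t ts : t = x -> (forall y, In y ts -> y = x) ->
  Prf (Imp (bigOr t ts) x).
Proof.
  revert t; induction ts as [|t' ts IH]; intros t Ht Hts; simpl; subst.
  - apply Prf_I.
  - apply Prf_orE; [apply Prf_I|]. apply IH.
    + apply Hts; left; reflexivity.
    + intros y Hy; apply Hts; right; exact Hy.
Qed.

Lemma bigOr_app1 t ts l : Prf (Imp (bigOr t ts) (bigOr t (ts ++ l))).
Proof.
  destruct l as [|u us]. { rewrite app_nil_r. apply Prf_I. }
  revert t; induction ts as [|t' ts IH]; intro t; simpl.
  - apply ax_O1.
  - apply Prf_orE; [apply ax_O1|]. eapply Prf_trans; [apply IH|apply ax_O2].
Qed.

Lemma bigOr_app2 t ts u us : Prf (Imp (bigOr u us) (bigOr t (ts ++ u :: us))).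
Proof.
  revert t; induction ts as [|t' ts IH]; intro t; simpl.
  - apply ax_O2.
  - eapply Prf_trans; [apply IH|apply ax_O2].
Qed.

Definition seqd := seq_derives.

Lemma seq_mono G G' D : (forall y, G y -> G' y) -> seq_derives G D -> seq_derives G' D.
Proof.
  intros HG [t [ts [H1 [H2 H3]]]]. exists t, ts. repeat split; auto.
  eapply Deriv_mono; eauto.
Qed.

Lemma single_collapse G x : seq_derives G (single x) -> Deriv G x.
Proof.
  intros [t [ts [H1 [H2 H3]]]].
  exact (d_mp _ _ _ (d_thm _ _ (bigOr_collapse x t ts H1 H2)) H3).
Qed.

Lemma single_intro G x : Deriv G x -> seq_derives G (single x).
Proof.
  intro H. exists x, []. repeat split; simpl; auto. contradiction.
Qed.

Fixpoint encode (f : form) : nat :=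
  match f with
  | Var p => to_nat (0, p)
  | And a b => to_nat (1, to_nat (encode a, encode b))
  | Or a b => to_nat (2, to_nat (encode a, encode b))
  | Imp a b => to_nat (3, to_nat (encode a, encode b))
  | Neg a => to_nat (4, encode a)
  | Box a b => to_nat (5, to_nat (encode a, encode b))
  end.

Fixpoint depth (f : form) : nat :=
  match f with
  | Var _ => 1
  | And a b | Or a b | Imp a b | Box a b => S (max (depth a) (depth b))
  | Neg a => S (depth a)
  end.

Fixpoint dec (k n : nat) : form :=
  match k with
  | 0 => Var 0
  | S k =>
    let (tag, r) := of_nat n in
    let (x, y) := of_nat r in
    match tag with
    | 0 => Var r
    | 1 => And (dec k x) (dec k y)
    | 2 => Or (dec k x) (dec k y)
    | 3 => Imp (dec k x) (dec k y)
    | 4 => Neg (dec k r)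
    | _ => Box (dec k x) (dec k y)
    end
  end.

Arguments to_nat : simpl never.
Arguments of_nat : simpl never.
Lemma dec_encode f : forall k, depth f <= k -> dec k (encode f) = f.
Proof.
  induction f; intros k Hk; destruct k as [|k]; simpl in Hk; try lia; simpl;
  rewrite ?cancel_of_to; try reflexivity.
  all: try (destruct (of_nat n); reflexivity).
  all: try (rewrite IHf1, IHf2 by lia; reflexivity).
  all: match goal with |- context [of_nat ?e] => destruct (of_nat e) end.
  all: rewrite IHf by lia; reflexivity.
Qed.

Definition enum (n : nat) : form := let (k, c) := of_nat n in dec k c.

Lemma enum_surj f : exists n, enum n = f.
Proof.
  exists (to_nat (depth f, encode f)). unfold enum. rewrite cancel_of_to.
  apply dec_encode. lia.
Qed.

Section Lind.
Variables (G D : form -> Prop).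

Fixpoint stage (n : nat) : form -> Prop :=
  match n with
  | 0 => G
  | S n => fun x => stage n x \/ (x = enum n /\ ~ seq_derives (add (stage n) (enum n)) D)
  end.

Definition lim (x : form) : Prop := exists n, stage n x.

Lemma stage_mono n m x : n <= m -> stage n x -> stage m x.
Proof. intros H; induction H; simpl; auto. Qed.

Hypothesis HGD : ~ seq_derives G D.

Lemma stage_ok n : ~ seq_derives (stage n) D.
Proof.
  induction n as [|n IH]; simpl; auto.
  destruct (classic (seq_derives (add (stage n) (enum n)) D)) as [Hy|Hn].
  - intro H; apply IH. eapply seq_mono; [|exact H].
    intros y [Hy'|[_ Hc]]; [exact Hy'|contradiction].
  - intro H; apply Hn. eapply seq_mono; [|exact H].
    intros y [Hy'|[Hy' _]]; [left; exact Hy'|right; exact Hy'].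
Qed.

Lemma lim_fin x : Deriv lim x -> exists n, Deriv (stage n) x.
Proof.
  intro H; induction H.
  - destruct H as [n Hn]. exists n. apply d_hyp; auto.
  - exists 0. apply d_thm; auto.
  - destruct IHDeriv1 as [n1 H1]. destruct IHDeriv2 as [n2 H2].
    exists (max n1 n2). apply d_mp with a.
    + eapply Deriv_mono; [|exact H1]. intros; eapply stage_mono; [|eauto]; lia.
    + eapply Deriv_mono; [|exact H2]. intros; eapply stage_mono; [|eauto]; lia.
Qed.

Lemma lim_ok : ~ seq_derives lim D.
Proof.
  intros [t [ts [H1 [H2 H3]]]]. destruct (lim_fin _ H3) as [n Hn].
  apply (stage_ok n). exists t, ts. auto.
Qed.

Lemma lim_incl x : G x -> lim x.
Proof. intro H; exists 0; exact H. Qed.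

Lemma lim_closed f : Deriv lim f -> lim f.
Proof.
  intro Hf. destruct (enum_surj f) as [k Hk].
  destruct (classic (seq_derives (add (stage k) f) D)) as [Hy|Hn].
  - exfalso. apply lim_ok. destruct Hy as [t [ts [H1 [H2 H3]]]].
    exists t, ts. repeat split; auto.
    apply d_mp with f; [|exact Hf].
    eapply Deriv_mono; [|apply ded; exact H3].
    intros y Hy; exists k; exact Hy.
  - exists (S k). simpl. right. subst f. auto.
Qed.

Lemma dtrans G' a b c : Deriv G' (Imp a b) -> Prf (Imp b c) -> Deriv G' (Imp a c).
Proof.
  intros H1 H2. apply ded. apply d_mp with b; [apply d_thm; exact H2|].
  apply ded_inv; exact H1.
Qed.

Lemma lim_prime a b : lim (Or a b) -> lim a \/ lim b.
Proof.
  intro Hab.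
  destruct (classic (lim a)) as [Ha|Ha]; [left; exact Ha|].
  destruct (classic (lim b)) as [Hb|Hb]; [right; exact Hb|].
  exfalso.
  assert (Ka : seq_derives lim (fun x => D x) -> False) by exact lim_ok.
  assert (Sa : forall c, ~ lim c -> exists t ts, D t /\ (forall x, In x ts -> D x) /\
                 Deriv lim (Imp c (bigOr t ts))).
  { intros c Hc. destruct (enum_surj c) as [k Hk].
    destruct (classic (seq_derives (add (stage k) c) D)) as [Hy|Hn].
    - destruct Hy as [t [ts [H1 [H2 H3]]]]. exists t, ts. repeat split; auto.
      eapply Deriv_mono; [|apply ded; exact H3]. intros y Hy; exists k; exact Hy.
    - exfalso; apply Hc. exists (S k). simpl. right. subst c. auto. }
  destruct (Sa a Ha) as [t1 [ts1 [A1 [A2 A3]]]].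
  destruct (Sa b Hb) as [t2 [ts2 [B1 [B2 B3]]]].
  apply lim_ok. exists t1, (ts1 ++ t2 :: ts2). repeat split; auto.
  - intros x Hx. apply in_app_or in Hx. destruct Hx as [Hx|[Hx|Hx]]; auto. subst; auto.
  - apply d_mp with (Or a b); [|apply d_hyp; exact Hab].
    apply d_mp with (Imp b (bigOr t1 (ts1 ++ t2 :: ts2))).
    + apply d_mp with (Imp a (bigOr t1 (ts1 ++ t2 :: ts2))).
      * apply d_thm, ax_O3.
      * eapply dtrans; [exact A3|apply bigOr_app1].
    + eapply dtrans; [exact B3|apply bigOr_app2].
Qed.

End Lind.

Definition theory (T : form -> Prop) :=
  (forall f, Deriv T f -> T f) /\ (forall a b, T (Or a b) -> T a \/ T b).

Lemma lindenbaum G D : ~ seq_derives G D ->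
  exists T, (forall g, G g -> T g) /\ theory T /\ ~ seq_derives T D.
Proof.
  intro H. exists (lim G D). split; [|split; [split|]].
  - apply lim_incl.
  - apply lim_closed; exact H.
  - apply lim_prime; exact H.
  - apply lim_ok; exact H.
Qed.

Definition CW := {T : form -> Prop | theory T}.

Definition CM : N4model := {|
  W := CW;
  le := fun X Y => forall f, proj1_sig X f -> proj1_sig Y f;
  le_refl := fun w f H => H;
  le_trans := fun u v w H1 H2 f H => H2 f (H1 f H);
  Vp := fun p X => proj1_sig X (Var p);
  Vn := fun p X => proj1_sig X (Neg (Var p));
  Vp_up := fun p w v H H' => H _ H';
  Vn_up := fun p w v H H' => H _ H'
|}.

Lemma th_mp T x y : theory T -> T x -> Prf (Imp x y) -> T y.
Proof.
  intros [Hc _] Hx Hxy. apply Hc. apply d_mp with x; [apply d_thm|apply d_hyp]; auto.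
Qed.

Lemma th_iff T x y : theory T -> Prf (Iff x y) -> (T x <-> T y).
Proof.
  intros Ht H; split; intro Hx; eapply th_mp; eauto; [apply Iff_l|apply Iff_r]; exact H.
Qed.

Lemma th_and T a b : theory T -> (T (And a b) <-> T a /\ T b).
Proof.
  intros Ht; split.
  - intro H; split; eapply th_mp; eauto; [apply ax_A1|apply ax_A2].
  - intros [Ha Hb]. destruct Ht as [Hc _]. apply Hc.
    apply d_mp with b; [|apply d_hyp; auto].
    apply d_mp with a; [apply d_thm, ax_A3|apply d_hyp; auto].
Qed.

Lemma th_or T a b : theory T -> (T (Or a b) <-> T a \/ T b).
Proof.
  intros Ht; split.
  - apply (proj2 Ht).
  - intros [H|H]; eapply th_mp; eauto; [apply ax_O1|apply ax_O2].
Qed.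

Lemma truth f : box_free f -> forall X : CW,
  (forces CM true X f <-> proj1_sig X f) /\ (forces CM false X f <-> proj1_sig X (Neg f)).
Proof.
  induction f; intros Hbf [T Ht]; simpl in *.
  - tauto.
  - destruct Hbf as [B1 B2].
    specialize (IHf1 B1 (exist _ T Ht)); specialize (IHf2 B2 (exist _ T Ht)); simpl in *.
    rewrite th_and by exact Ht.
    rewrite (th_iff T _ _ Ht (ax_NA f1 f2)), th_or by exact Ht.
    tauto.
  - destruct Hbf as [B1 B2].
    specialize (IHf1 B1 (exist _ T Ht)); specialize (IHf2 B2 (exist _ T Ht)); simpl in *.
    rewrite th_or by exact Ht.
    rewrite (th_iff T _ _ Ht (ax_NO f1 f2)), th_and by exact Ht.
    tauto.
  - destruct Hbf as [B1 B2]. split.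
    + split.
      * intro Hf. apply NNPP; intro Hn.
        assert (Hnd : ~ seq_derives (add T f1) (single f2)).
        { intro Hs. apply Hn. apply (proj1 Ht). apply ded. apply single_collapse; exact Hs. }
        destruct (lindenbaum _ _ Hnd) as [T' [Hi [Ht' Hno]]].
        assert (Hle : forall g, T g -> T' g) by (intros g Hg; apply Hi; left; exact Hg).
        specialize (Hf (exist _ T' Ht') Hle).
        destruct (IHf1 B1 (exist _ T' Ht')) as [[_ A1] _].
        destruct (IHf2 B2 (exist _ T' Ht')) as [[A2 _] _].
        simpl in *. apply Hno. apply single_intro. apply d_hyp.
        apply A2. apply Hf. apply A1. apply Hi. right; reflexivity.
      * intros H [T' Ht'] Hle Ha. simpl in Hle.
        destruct (IHf1 B1 (exist _ T' Ht')) as [[A1 _] _].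
        destruct (IHf2 B2 (exist _ T' Ht')) as [[_ A2] _].
        simpl in *. apply A2. apply (proj1 Ht'). apply d_mp with f1.
        -- apply d_hyp. apply Hle; exact H.
        -- apply d_hyp. apply A1; exact Ha.
    + specialize (IHf1 B1 (exist _ T Ht)); specialize (IHf2 B2 (exist _ T Ht)); simpl in *.
      rewrite (th_iff T _ _ Ht (ax_NI f1 f2)), th_and by exact Ht.
      tauto.
  - specialize (IHf Hbf (exist _ T Ht)); simpl in *.
    rewrite (th_iff T _ _ Ht (ax_NN f)). tauto.
  - contradiction.
Qed.

Lemma completeness G D : (forall g, G g -> box_free g) -> (forall d, D d -> box_free d) ->
  N4_conseq G D -> seq_derives G D.
Proof.
  intros HG HD Hc. apply NNPP; intro Hn.
  destruct (lindenbaum _ _ Hn) as [T [Hi [Ht Hno]]].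
  destruct (Hc CM (exist _ T Ht)) as [d [Hd Hf]].
  - intros g Hg. apply (proj2 (proj1 (truth g (HG g Hg) (exist _ T Ht)))). simpl. auto.
  - apply (proj1 (proj1 (truth d (HD d Hd) (exist _ T Ht)))) in Hf. simpl in Hf.
    apply Hno. exists d, []. repeat split; auto. simpl; contradiction. apply d_hyp; exact Hf.
Qed.

Fixpoint erase (f : form) : form :=
  match f with
  | Var p => Var p
  | And a b => And (erase a) (erase b)
  | Or a b => Or (erase a) (erase b)
  | Imp a b => Imp (erase a) (erase b)
  | Neg a => Neg (erase a)
  | Box a b => erase b
  end.

Lemma erase_bf f : box_free f -> erase f = f.
Proof.
  induction f; simpl; intros H; try tauto;
  try (destruct H; rewrite IHf1, IHf2 by assumption; reflexivity).
  rewrite IHf by assumption; reflexivity.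
Qed.

Lemma hered M f : forall pos w v, le M w v -> forces M pos w f -> forces M pos v f.
Proof.
  induction f; intros pos w v Hwv H; destruct pos; simpl in *.
  - eapply Vp_up; eauto.
  - eapply Vn_up; eauto.
  - destruct H; split; eauto.
  - destruct H; [left|right]; eauto.
  - destruct H; [left|right]; eauto.
  - destruct H; split; eauto.
  - intros u Hvu; apply H; eapply le_trans; eauto.
  - destruct H; split; eauto.
  - eauto.
  - eauto.
  - contradiction.
  - contradiction.
Qed.

Lemma soundness a : Prf a -> forall M w, forces M true w (erase a).
Proof.
  intro H; induction H; intros M w; simpl in *.
  - intros v Hv Ha u Hu Hb. eapply hered; eauto.
  - intros v Hv H1 u Hu H2 x Hx Ha.
    apply (H1 x (le_trans M _ _ _ Hu Hx) Ha x (le_refl M x)).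
    apply H2; auto.
  - intros v Hv [Ha Hb]; auto.
  - intros v Hv [Ha Hb]; auto.
  - intros v Hv Ha u Hu Hb. split; auto. eapply hered; eauto.
  - intros v Hv Ha; auto.
  - intros v Hv Ha; auto.
  - intros v Hv H1 u Hu H2 x Hx [Ha|Hb].
    + apply (H1 x (le_trans M _ _ _ Hu Hx) Ha).
    + apply (H2 x Hx Hb).
  - split; intros v Hv Ha; auto.
  - split; intros v Hv Ha; auto.
  - split; intros v Hv Ha; auto.
  - split; intros v Hv Ha; auto.
  - firstorder.
  - intros v Hv Ha; auto.
  - intros v Hv H1 u Hu Hb. apply (H1 u Hu Hb).
  - intros v Hv Ha; auto.
  - apply (IHPrf1 M w w (le_refl M w)). apply IHPrf2.
  - firstorder.
  - apply IHPrf.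
  - apply IHPrf.
Qed.

Lemma Prf_subst s a : Prf a -> Prf (subst s a).
Proof.
  intro H; induction H; simpl.
  - apply ax_K.
  - apply ax_S.
  - apply ax_A1.
  - apply ax_A2.
  - apply ax_A3.
  - apply ax_O1.
  - apply ax_O2.
  - apply ax_O3.
  - exact (ax_NN (subst s a)).
  - exact (ax_NA (subst s a) (subst s b)).
  - exact (ax_NO (subst s a) (subst s b)).
  - exact (ax_NI (subst s a) (subst s b)).
  - exact (ax_C1 (subst s a) (subst s b) (subst s c)).
  - exact (ax_C2 (subst s a) (subst s b) (subst s c)).
  - exact (ax_C3 (subst s a) (subst s b) (subst s c)).
  - exact (ax_C4 (subst s a) (subst s b)).
  - exact (r_MP _ _ IHPrf1 IHPrf2).
  - exact (r_RA (subst s a) (subst s b) (subst s c) IHPrf).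
  - exact (r_RC (subst s a) (subst s b) (subst s c) IHPrf).
  - exact (r_RCN (subst s a) (subst s b) (subst s c) IHPrf).
Qed.

Lemma Deriv_subst s G a : Deriv G a -> Deriv (img s G) (subst s a).
Proof.
  intro H; induction H.
  - apply d_hyp. exists a; auto.
  - apply d_thm, Prf_subst; auto.
  - eapply d_mp; [exact IHDeriv1|exact IHDeriv2].
Qed.

Lemma bigOr_subst s t ts : subst s (bigOr t ts) = bigOr (subst s t) (map (subst s) ts).
Proof.
  revert t; induction ts as [|t' ts IH]; intro t; simpl; auto. rewrite IH; reflexivity.
Qed.

Lemma seq_subst s G D : seq_derives G D -> seq_derives (img s G) (img s D).
Proof.
  intros [t [ts [H1 [H2 H3]]]]. exists (subst s t), (map (subst s) ts).
  repeat split.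
  - exists t; auto.
  - intros x Hx. apply in_map_iff in Hx. destruct Hx as [y [Hy1 Hy2]].
    exists y; auto.
  - rewrite <- bigOr_subst. apply Deriv_subst; auto.
Qed.

Theorem lemma2 :
  (forall (G D : form -> Prop) (s : nat -> form),
      (forall g, G g -> box_free g) ->
      (forall d, D d -> box_free d) ->
      N4_conseq G D ->
      seq_derives (img s G) (img s D))
  /\
  (forall (G : form -> Prop) (a b : form),
      seq_derives G (single (Imp a b)) <-> seq_derives (add G a) (single b))
  /\
  (forall a : form, box_free a -> (Prf a <-> N4_valid a)).
Proof.
  split; [|split].
  - intros G D s HG HD Hc. apply seq_subst, completeness; auto.
  - intros G a b; split; intro H.
    + apply single_intro, ded_inv, single_collapse; exact H.
    + apply single_intro, ded, single_collapse; exact H.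
  - intros a Ha; split.
    + intros H M w. rewrite <- (erase_bf a Ha). apply soundness; exact H.
    + intro H. apply Deriv_empty, single_collapse, completeness.
      * contradiction.
      * intros d Hd; unfold single in Hd; subst; exact Ha.
      * intros M w _. exists a; split; [reflexivity|apply H].
Qed.
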